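(* For every $y\in[0,1]$, the closure $\overline{R^{-1}(y)}$ of the fiber $R^{-1}(y)$ is a Cantor set of Lebesgue measure zero, and $\overline{R^{-1}(y)}\setminus R^{-1}(y)\subset\mathscr D$ (in particular this remainder is countable).
   Context: Define $\rho$ on binary words: for $b=b_1b_2\dots$, $\rho(b)$ is obtained by deleting every digit $b_n=0$ and replacing every $b_n=1$ by $0$ if $n$ is odd and by $1$ if $n$ is even. For $x\in(0,1]$ let $\beta(x)$ be the unique binary expansion of $x$ with infinitely many $1$'s. Define $R:[0,1]\to[0,1]$ by $R(0)=2/3$ and, for $x\in(0,1]$, $R(x)=\sum_{n\ge1}c_n2^{-n}$ where $c=\rho(\beta(x))$. $\mathscr D$ is the set of dyadic rationals in $[0,1]$. *)

(* Defs.v *)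
From HB Require Import structures.
From mathcomp Require Import all_boot all_order all_algebra.
From mathcomp Require Import all_classical all_reals.
From mathcomp Require Import topology normedtype sequences measure lebesgue_measure.
Set Implicit Arguments. Unset Strict Implicit. Unset Printing Implicit Defensive.
Import Order.TTheory GRing.Theory Num.Theory.
Import numFieldNormedType.Exports.
Local Open Scope classical_set_scope.
Local Open Scope ring_scope.

(* Binary words are infinite sequences [b : nat -> bool]; the digit
   b_n (n >= 1) is [b n]; the value [b 0] is ignored. *)

Definition is_binary_expansion {R : realType} (x : R) (b : nat -> bool) :=
  (fun N : nat => \sum_(1 <= n < N) ((b n)%:R / 2 ^+ n : R)) @ \oo --> x.

Definition infinitely_many_ones (b : nat -> bool) :=
  forall N : nat, exists n : nat, (N < n)%N /\ b n.

(* beta(x): the (unique, for x in (0,1]) binary expansion of x with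
   infinitely many 1's. *)
Definition beta {R : realType} (x : R) : nat -> bool :=
  get [set b | is_binary_expansion x b /\ infinitely_many_ones b].

Definition ones_upto (b : nat -> bool) (m : nat) : nat :=
  \sum_(1 <= k < m.+1) (b k : nat).

(* rho(b) for an infinite word b with infinitely many 1's:
   the 1 at position m of b (which is the (ones_upto b m)-th 1) becomes
   the (ones_upto b m)-th digit of rho(b), equal to 0 if m is odd and 1
   if m is even; zeros of b are deleted.  Digit c_n (n >= 1) is [rho b n]. *)
Definition rho (b : nat -> bool) (n : nat) : bool :=
  `[< exists m : nat, [/\ (1 <= m)%N, b m, ~~ odd m & ones_upto b m = n] >].

Definition Rmap {R : realType} (x : R) : R :=
  if x == 0 then 2 / 3
  else limn (fun N : nat => \sum_(1 <= n < N) ((rho (beta x) n)%:R / 2 ^+ n : R)).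

Definition fiber {R : realType} (y : R) : set R :=
  [set x | 0 <= x <= 1 /\ Rmap x = y].

Definition dyadic {R : realType} : set R :=
  [set x | 0 <= x <= 1 /\ exists k n : nat, x = k%:R / 2 ^+ n].

Definition cantor_set {T : topologicalType} (A : set T) :=
  [/\ A !=set0, compact A, perfect_set A & totally_disconnected A].

(* Main.v *)
Require Import Defs.
From HB Require Import structures.
From mathcomp Require Import all_boot all_order all_algebra.
From mathcomp Require Import all_classical all_reals.
From mathcomp Require Import topology normedtype sequences measure lebesgue_measure.
From mathcomp Require Import lra ring zify.
Import Order.TTheory GRing.Theory Num.Theory.
Import numFieldNormedType.Exports.
Local Open Scope classical_set_scope.
Local Open Scope ring_scope.

Set Implicit Arguments. Unset Strict Implicit. Unset Printing Implicit Defensive.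
Section Basic.
Context {R : realType}.

Definition ps (d : nat -> bool) := fun N : nat => \sum_(1 <= n < N) ((d n)%:R / 2 ^+ n : R).
Definition S (d : nat -> bool) (n : nat) : R := ps d n.+1.
Definition w (n : nat) : R := (2 ^+ n)^-1.

Lemma w_gt0 n : 0 < w n.
Proof. by rewrite /w invr_gt0 exprn_gt0. Qed.

Lemma wS n : w n.+1 = w n / 2.
Proof. by rewrite /w exprS invfM mulrC. Qed.

Lemma w0 : w 0 = 1.
Proof. by rewrite /w expr0 invr1. Qed.

Lemma S0 d : S d 0 = 0.
Proof. by rewrite /S /ps big_geq. Qed.

Lemma S_rec d n : S d n.+1 = S d n + (d n.+1)%:R * w n.+1.
Proof. by rewrite /S /ps big_nat_recr //=. Qed.

Lemma digit_w (b : bool) n : 0 <= b%:R * w n <= w n.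
Proof.
case: b => /=; rewrite ?mul1r ?mul0r lexx ?ltW ?w_gt0 //.
Qed.

Lemma S_mono d n m : (n <= m)%N -> S d n <= S d m.
Proof.
elim: m => [|m IH]; first by rewrite leqn0 => /eqP ->.
rewrite leq_eqVlt => /orP [/eqP -> //|/IH H].
rewrite S_rec; apply: (le_trans H); rewrite lerDl.
by case/andP: (digit_w (d m.+1) m.+1).
Qed.

Lemma S_ge0 d n : 0 <= S d n.
Proof. by rewrite -(S0 d); apply: S_mono. Qed.

Lemma S_up d n m : (n <= m)%N -> S d m + w m <= S d n + w n.
Proof.
elim: m => [|m IH]; first by rewrite leqn0 => /eqP ->.
rewrite leq_eqVlt => /orP [/eqP -> //|/IH H].
apply: le_trans H; rewrite S_rec -addrA lerD2l.
have := digit_w (d m.+1) m.+1; case/andP => _ H.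
rewrite wS. rewrite wS in H. lra.
Qed.

Lemma S_le1 d n : S d n <= 1.
Proof.
have := S_up d (leq0n n); rewrite S0 w0 add0r.
have := w_gt0 n; lra.
Qed.

Lemma ps_S d N : ps d N = S d N.-1.
Proof. by case: N => [|N] //; rewrite /S /ps !big_geq. Qed.

Lemma ps_cvg d : cvgn (ps d).
Proof.
apply: nondecreasing_is_cvgn.
  move=> n m nm; rewrite !ps_S; apply: S_mono.
  by case: n nm => [|n]; case: m => [|m] //=.
by exists 1 => _ [N _ <-]; rewrite ps_S S_le1.
Qed.

Definition v d := limn (ps d).

Lemma v_bounds d n : S d n <= v d <= S d n + w n.
Proof.
apply/andP; split.
  apply: limr_ge; first exact: ps_cvg.
  exists n.+1 => // N /= HN; rewrite ps_S; apply: S_mono.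
  by case: N HN => [|N].
apply: limr_le; first exact: ps_cvg.
exists n.+1 => // N /= HN; rewrite ps_S.
have := S_up d (_ : (n <= N.-1)%N); case: N HN => [|N] //= HN.
move=> /(_ HN) H; have := w_gt0 N; lra.
Qed.

End Basic.

Set Implicit Arguments. Unset Strict Implicit. Unset Printing Implicit Defensive.
Section Char.
Context {R : realType}.
Local Notation S := (@S R).
Local Notation w := (@w R).
Local Notation v := (@v R).
Local Notation ps := (@ps R).
Implicit Types (d : nat -> bool).
Local Notation v_bounds := (@v_bounds R).
Local Notation S_up := (@S_up R).
Local Notation S_mono := (@S_mono R).

Lemma geo_small (q e : R) : 0 <= q < 1 -> 0 < e -> exists n, q ^+ n < e.
Proof.
move=> /andP [q0 q1] e0.
have q1' : `|q| < 1 by rewrite ger0_norm.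
have := cvgr0_norm_lt (fun n : nat => q ^+ n) (cvg_expr q1') e e0.
case=> N _ HN; exists N; have := HN N (leqnn N) => /=.
by rewrite ger0_norm // exprn_ge0.
Qed.

Lemma w_small (e : R) : 0 < e -> exists n, w n < e.
Proof.
move=> e0; have h : 0 <= (2^-1 : R) < 1.
  apply/andP; split; first by rewrite invr_ge0.
  by rewrite invf_lt1 // ltr1n.
have [n Hn] := geo_small h e0.
by exists n; rewrite /w -exprVn.
Qed.

Lemma le_w (a b : R) : (forall n, a <= b + w n) -> a <= b.
Proof.
move=> H; rewrite leNgt; apply/negP => ba.
have h : 0 < a - b by rewrite subr_gt0.
have [n Hn] := w_small h.
have := H n; lra.
Qed.

Lemma w_anti m n : (m <= n)%N -> w n <= w m.
Proof.
elim: n => [|n IH]; first by rewrite leqn0 => /eqP ->.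
rewrite leq_eqVlt => /orP [/eqP -> //|]; rewrite ltnS => /IH H.
apply: le_trans H; rewrite wS; have := w_gt0 (R:=R) n; lra.
Qed.

Lemma v_lim d : ps d @ \oo --> v d.
Proof. exact: ps_cvg. Qed.

Lemma binexpE (x : R) d : is_binary_expansion x d <-> v d = x.
Proof.
split; first by move=> H; apply: cvg_lim.
by move=> <-; apply: v_lim.
Qed.

Definition Pc (x : R) d := forall n, S d n < x <= S d n + w n.
Definition Qc (x : R) d := forall n, S d n <= x < S d n + w n.

Lemma S_step d n m : (n < m)%N -> d m -> S d n + w m <= S d m.
Proof.
case: m => [//|m] /=; rewrite ltnS => nm dm.
by rewrite S_rec dm mul1r lerD2r S_mono.
Qed.

Lemma inf_Pc d : infinitely_many_ones d -> Pc (v d) d.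
Proof.
move=> Hi n; have /andP [_ H1] := v_bounds d n; rewrite H1 andbT.
have [m [nm dm]] := Hi n.
have /andP [H _] := v_bounds d m.
have := S_step nm dm; have := w_gt0 (R:=R) m; lra.
Qed.

Lemma fin_v d N : (forall k, (N < k)%N -> d k = false) -> v d = S d N.
Proof.
move=> HN.
have HS : forall m, (N <= m)%N -> S d m = S d N.
  elim=> [|m IH]; first by rewrite leqn0 => /eqP ->.
  rewrite leq_eqVlt => /orP [/eqP <- //|]; rewrite ltnS => Nm.
  by rewrite S_rec HN ?ltnS // mul0r addr0 IH.
apply/eqP; rewrite eq_le; apply/andP; split; last first.
  by have /andP [] := v_bounds d N.
apply: le_w => n; have /andP [_ H] := v_bounds d (maxn n N).
rewrite HS ?leq_maxr // in H; apply: (le_trans H).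
by rewrite lerD2l w_anti // leq_maxl.
Qed.

Lemma not_inf d : ~ infinitely_many_ones d -> exists N, forall k, (N < k)%N -> d k = false.
Proof.
move=> H; apply: contrapT => H1; apply: H => N; apply: contrapT => H2; apply: H1.
exists N => k Nk; apply/negbTE/negP => dk; apply: H2; by exists k.
Qed.

Lemma fin_Qc d : ~ infinitely_many_ones d -> Qc (v d) d.
Proof.
move/not_inf => [N HN] n; rewrite (fin_v HN).
have HS : forall m, (N <= m)%N -> S d m = S d N.
  elim=> [|m IH]; first by rewrite leqn0 => /eqP ->.
  rewrite leq_eqVlt => /orP [/eqP <- //|]; rewrite ltnS => Nm.
  by rewrite S_rec HN ?ltnS // mul0r addr0 IH.
case: (leqP N n) => Nn.
  by rewrite HS // lexx ltrDl w_gt0.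
rewrite S_mono /=; last exact: ltnW.
have := S_up d (ltnW Nn); have := w_gt0 (R:=R) N; lra.
Qed.

Lemma Pc_v (x : R) d : Pc x d -> v d = x /\ infinitely_many_ones d.
Proof.
move=> HP.
have vx : v d = x.
  apply/eqP; rewrite eq_le; apply/andP; split; apply: le_w => n.
    have /andP [_ H] := v_bounds d n; have /andP [H' _] := HP n; lra.
  have /andP [H _] := v_bounds d n; have /andP [_ H'] := HP n; lra.
split => //; apply: contrapT => /not_inf [N HN].
have := HP N; rewrite -vx (fin_v HN); lra.
Qed.

Lemma S_eq d d' n : (forall k, (1 <= k <= n)%N -> d k = d' k) -> S d n = S d' n.
Proof.
move=> H; rewrite /S /ps; apply: eq_big_nat => k /andP [k1 kn].
by rewrite H // k1 -ltnS.
Qed.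

Lemma uniqP_upto (x : R) d d' n :
  (forall k, (k <= n)%N -> S d k < x <= S d k + w k) ->
  (forall k, (k <= n)%N -> S d' k < x <= S d' k + w k) ->
  forall k, (1 <= k <= n)%N -> d k = d' k.
Proof.
elim: n => [|n IH] H1 H2 k; first by case: k.
have IH' := IH (fun k kn => H1 k (leqW kn)) (fun k kn => H2 k (leqW kn)).
case/andP => k1; rewrite leq_eqVlt => /orP [/eqP ->|]; last first.
  by rewrite ltnS => kn; apply: IH'; rewrite k1.
have := H1 n.+1 (leqnn _); have := H2 n.+1 (leqnn _).
rewrite !S_rec (S_eq IH') => Ha Hb.
case: (d n.+1) Hb; case: (d' n.+1) Ha => //=; rewrite ?mul1r ?mul0r ?addr0 wS; lra.
Qed.

Lemma uniqQ_upto (x : R) d d' n :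
  (forall k, (k <= n)%N -> S d k <= x < S d k + w k) ->
  (forall k, (k <= n)%N -> S d' k <= x < S d' k + w k) ->
  forall k, (1 <= k <= n)%N -> d k = d' k.
Proof.
elim: n => [|n IH] H1 H2 k; first by case: k.
have IH' := IH (fun k kn => H1 k (leqW kn)) (fun k kn => H2 k (leqW kn)).
case/andP => k1; rewrite leq_eqVlt => /orP [/eqP ->|]; last first.
  by rewrite ltnS => kn; apply: IH'; rewrite k1.
have := H1 n.+1 (leqnn _); have := H2 n.+1 (leqnn _).
rewrite !S_rec (S_eq IH') => Ha Hb.
case: (d n.+1) Hb; case: (d' n.+1) Ha => //=; rewrite ?mul1r ?mul0r ?addr0 wS; lra.
Qed.

Lemma uniqP (x : R) d d' : Pc x d -> Pc x d' -> forall k, (1 <= k)%N -> d k = d' k.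
Proof.
move=> H1 H2 k k1; apply: (@uniqP_upto x d d' k).
all: try (by move=> i _; apply: H1); try (by move=> i _; apply: H2).
all: by rewrite ?k1 ?leqnn.
Qed.

Lemma uniqQ (x : R) d d' : Qc x d -> Qc x d' -> forall k, (1 <= k)%N -> d k = d' k.
Proof.
move=> H1 H2 k k1; apply: (@uniqQ_upto x d d' k).
all: try (by move=> i _; apply: H1); try (by move=> i _; apply: H2).
all: by rewrite ?k1 ?leqnn.
Qed.

Fixpoint sP (x : R) (n : nat) : R :=
  match n with 0 => 0 | n'.+1 => if sP x n' + w n < x then sP x n' + w n else sP x n' end.
Definition dP (x : R) (n : nat) : bool :=
  match n with 0 => false | n'.+1 => sP x n' + w n < x end.

Lemma dP_S x n : S (dP x) n = sP x n.
Proof.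
elim: n => [|n IH]; first by rewrite S0.
rewrite S_rec IH /=; case: ifP => _; by rewrite ?mul1r ?mul0r ?addr0.
Qed.

Lemma dP_Pc (x : R) : 0 < x <= 1 -> Pc x (dP x).
Proof.
move=> /andP [x0 x1] n; rewrite dP_S.
elim: n => [|n IH]; first by rewrite /= w0 add0r x0 x1.
rewrite /=; case: ifPn => H; move: H IH; rewrite ?wS -?leNgt; lra.
Qed.

Lemma beta_Pc (x : R) : 0 < x <= 1 -> Pc x (beta x).
Proof.
move=> Hx.
have Hex : exists b, is_binary_expansion x b /\ infinitely_many_ones b.
  have [v1 i1] := Pc_v (dP_Pc Hx).
  by exists (dP x); split => //; apply/binexpE.
have [H1 H2] : is_binary_expansion x (beta x) /\ infinitely_many_ones (beta x).
  exact: (getPex Hex).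
have E : v (beta x) = x by apply/binexpE.
by have := inf_Pc H2; rewrite E.
Qed.

Lemma beta_eq (x : R) d : 0 < x <= 1 -> Pc x d -> forall k, (1 <= k)%N -> beta x k = d k.
Proof. by move=> Hx; apply: uniqP; apply: beta_Pc. Qed.

End Char.

Set Implicit Arguments. Unset Strict Implicit. Unset Printing Implicit Defensive.
Section Comb.
Implicit Types (d : nat -> bool).

Lemma ones0 d : ones_upto d 0 = 0%N.
Proof. by rewrite /ones_upto big_geq. Qed.

Lemma onesS d m : ones_upto d m.+1 = (ones_upto d m + d m.+1)%N.
Proof. by rewrite /ones_upto big_nat_recr. Qed.

Lemma ones_mono d m n : (m <= n)%N -> (ones_upto d m <= ones_upto d n)%N.
Proof.
elim: n => [|n IH]; first by rewrite leqn0 => /eqP ->.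
rewrite leq_eqVlt => /orP [/eqP -> //|]; rewrite ltnS => /IH H.
by rewrite onesS; apply: (leq_trans H); rewrite leq_addr.
Qed.

Lemma ones_strict d m n : (m < n)%N -> d n -> (ones_upto d m < ones_upto d n)%N.
Proof.
case: n => [//|n]; rewrite ltnS => mn dn.
by rewrite onesS dn addn1 ltnS ones_mono.
Qed.

Lemma ones_eq d d' n m : (forall k, (1 <= k <= n)%N -> d k = d' k) -> (m <= n)%N ->
  ones_upto d m = ones_upto d' m.
Proof.
move=> H mn; rewrite /ones_upto; apply: eq_big_nat => k /andP [k1 km].
by rewrite H // k1 (leq_trans _ mn) // -ltnS.
Qed.

Lemma rhoP d n : reflect (exists m, [/\ (1 <= m)%N, d m, ~~ odd m & ones_upto d m = n]) (rho d n).
Proof. exact: asboolP. Qed.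

Lemma ones_inj d m m' : d m -> d m' -> ones_upto d m = ones_upto d m' -> m = m'.
Proof.
move=> dm dm' E; case: (ltngtP m m') => // H.
  by have := ones_strict H dm'; rewrite E ltnn.
by have := ones_strict H dm; rewrite E ltnn.
Qed.

Lemma rho_at d m : (1 <= m)%N -> d m -> rho d (ones_upto d m) = ~~ odd m.
Proof.
move=> m1 dm; apply/rhoP; case: (boolP (odd m)) => om /=.
  by case=> m' [_ dm' om' E]; move: om'; rewrite (ones_inj dm' dm E) om.
by exists m; split.
Qed.

Lemma rho_agree1 d d' n k : (forall i, (1 <= i <= n)%N -> d i = d' i) ->
  (k <= ones_upto d n)%N -> rho d k -> rho d' k.
Proof.
move=> H kn /rhoP [m [m1 dm om E]]; apply/rhoP.
have mn : (m <= n)%N.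
  rewrite leqNgt; apply/negP => nm.
  by have := ones_strict nm dm; rewrite E ltnNge kn.
exists m; split => //; first by rewrite -H // m1.
by rewrite -E (ones_eq (d := d') (d' := d) _ mn) // => i Hi; rewrite H.
Qed.

Lemma rho_agree d d' n k : (forall i, (1 <= i <= n)%N -> d i = d' i) ->
  (k <= ones_upto d n)%N -> rho d k = rho d' k.
Proof.
move=> H kn; apply/idP/idP; first exact: rho_agree1 H kn.
apply: (@rho_agree1 d' d n k) => [i Hi|]; first by rewrite H.
by rewrite -(ones_eq H (leqnn n)).
Qed.



Lemma ones_ge d m : (ones_upto d m <= m)%N.
Proof.
elim: m => [|m IH]; first by rewrite ones0.
by rewrite onesS; case: (d m.+1) => /=; lia.
Qed.

Lemma rho_ext d d' : (forall i, (1 <= i)%N -> d i = d' i) -> rho d = rho d'.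
Proof.
move=> H; apply: funext => k.
have H' : forall i, (1 <= i <= k)%N -> d i = d' i by move=> i /andP [i1 _]; apply: H.
apply/idP/idP => /rhoP [m [m1 dm om E]]; apply/rhoP; exists m; split => //.
- by rewrite -H.
- by rewrite -E (@ones_eq d' d m m) // => i /andP [i1 _]; rewrite H.
- by rewrite H.
- by rewrite -E (@ones_eq d d' m m) // => i /andP [i1 _]; rewrite H.
Qed.

Lemma ones_unbounded d : infinitely_many_ones d -> forall K, exists n, (K <= ones_upto d n)%N.
Proof.
move=> Hi; elim=> [|K [n Hn]]; first by exists 0%N.
have [m [nm dm]] := Hi n; exists m.
by apply: leq_ltn_trans Hn (ones_strict nm dm).
Qed.

End Comb.

Set Implicit Arguments. Unset Strict Implicit. Unset Printing Implicit Defensive.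
Section Constr.
Context {R : realType}.
Local Notation S := (@S R).
Local Notation w := (@w R).
Local Notation v := (@v R).
Local Notation ps := (@ps R).
Implicit Types (d c : nat -> bool).

Lemma v_ext c c' : (forall k, (1 <= k)%N -> c k = c' k) -> v c = v c'.
Proof.
move=> H; rewrite /v; have -> // : ps c = ps c'.
apply: funext => N; rewrite /ps.
by apply: eq_big_nat => k /andP [k1 _]; rewrite H.
Qed.

Lemma v_agree c c' K : (forall k, (1 <= k <= K)%N -> c k = c' k) -> v c <= v c' + w K.
Proof.
move=> H; have /andP [_ H1] := v_bounds (R:=R) c K.
have /andP [H2 _] := v_bounds (R:=R) c' K.
rewrite (S_eq H) in H1; lra.
Qed.

Lemma Rmap_pos (x : R) : x != 0 -> Rmap x = v (rho (beta x)).
Proof. by move=> H; rewrite /Rmap (negbTE H). Qed.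

Definition blk c (k : nat) : bool := if odd k then ~~ c (k.+1)./2 else c k./2.

Lemma blk_odd c n : blk c (n.*2).+1 = ~~ c n.+1.
Proof. by rewrite /blk /= odd_double /= doubleK. Qed.

Lemma blk_even c n : blk c (n.+1).*2 = c n.+1.
Proof. by rewrite /blk odd_double doubleK. Qed.

Lemma ones_blk c n : ones_upto (blk c) n.*2 = n.
Proof.
elim: n => [|n IH]; first by rewrite ones0.
rewrite doubleS !onesS -doubleS blk_even blk_odd IH.
by case: (c n.+1); rewrite /= ?addn0 ?addn1.
Qed.

Lemma inf_blk c : infinitely_many_ones (blk c).
Proof.
move=> N; case E: (c N.+1).
  exists (N.+1).*2; split; last by rewrite blk_even.
  by rewrite doubleS ltnS leqW // -addnn leq_addr.
exists (N.*2).+1; split; last by rewrite blk_odd E.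
by rewrite ltnS -addnn leq_addr.
Qed.

Lemma rho_blk c k : rho (blk c) k.+1 = c k.+1.
Proof.
case E: (c k.+1).
  by rewrite -{1}(ones_blk c k.+1) rho_at ?blk_even ?E // odd_double.
have H1 : blk c (k.*2).+1 by rewrite blk_odd E.
have := rho_at (isT : (0 < (k.*2).+1)%N) H1.
by rewrite onesS ones_blk H1 addn1 /= odd_double.
Qed.

Lemma v_zero : v (fun _ => false) = 0.
Proof.
have HS : forall n, S (fun _ => false) n = 0.
  by move=> n; rewrite /S /ps big1 // => k _; rewrite mul0r.
apply/eqP; rewrite eq_le; apply/andP; split.
  apply: le_w => n; have /andP [_ H] := v_bounds (R:=R) (fun _ => false) n.
  by move: H; rewrite HS.
by have /andP [H _] := v_bounds (R:=R) (fun _ => false) 0; move: H; rewrite HS.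
Qed.

Lemma expansion_exists (y : R) : 0 <= y <= 1 -> exists c, v c = y.
Proof.
move=> /andP [y0 y1]; case: (eqVneq y 0) => [->|yn0].
  by exists (fun _ => false); exact: v_zero.
have Hy : 0 < y <= 1 by rewrite lt_def yn0 y0 y1.
by exists (beta y); case: (Pc_v (beta_Pc Hy)).
Qed.

Lemma fiber_pos (y : R) : 0 <= y <= 1 -> exists x, fiber y x /\ 0 < x.
Proof.
move=> /expansion_exists [c vc].
set x := v (blk c).
have HP : Pc x (blk c) by apply: inf_Pc; apply: inf_blk.
have /andP [x0 x1] := HP 0%N; rewrite S0 w0 add0r in x0 x1.
have Hx : 0 < x <= 1 by rewrite x0 x1.
exists x; split => //; split; first by rewrite ltW.
rewrite Rmap_pos ?gt_eqF // -vc.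
rewrite (rho_ext (beta_eq Hx HP)).
by apply: v_ext => -[|k] // _; rewrite rho_blk.
Qed.

End Constr.

Set Implicit Arguments. Unset Strict Implicit. Unset Printing Implicit Defensive.
Section Pert.
Context {R : realType}.
Local Notation S := (@S R).
Local Notation w := (@w R).
Local Notation v := (@v R).
Local Notation ps := (@ps R).
Implicit Types (d c b : nat -> bool).

Definition sh b N (k : nat) : bool :=
  if (k <= N)%N then b k else if (k <= N.+2)%N then false else b (k - 2)%N.

Lemma sh_hi b N k : sh b N (k + N.+2).+1 = b (k + N).+1.
Proof.
rewrite /sh; case: ifP => h; first lia.
case: ifP => h'; first lia.
by congr b; lia.
Qed.

Lemma w3 n : w n.+3 = w n.+1 / 4.
Proof. rewrite !wS; lra. Qed.

Lemma sh_lo b N k : (k <= N)%N -> sh b N k = b k.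
Proof. by rewrite /sh => ->. Qed.

Lemma sh_mid b N : sh b N N.+1 = false /\ sh b N N.+2 = false.
Proof.
rewrite /sh; split; case: ifP => [h|_]; try lia; case: ifPn => // /negP h; lia.
Qed.

Lemma S_sh_lo b N n : (n <= N)%N -> S (sh b N) n = S b n.
Proof.
move=> nN; apply: S_eq => k /andP [_ kn]; rewrite sh_lo //.
exact: leq_trans kn nN.
Qed.

Lemma S_sh_hi b N n : S (sh b N) (n + N.+2) = S b N + (S b (n + N) - S b N) / 4.
Proof.
elim: n => [|n IH].
  rewrite !add0n !S_rec S_sh_lo //; have [-> ->] := sh_mid b N.
  by rewrite !mul0r !addr0 subrr mul0r addr0.
rewrite addSn S_rec IH addSn S_rec.
rewrite sh_hi !addnS w3; lra.
Qed.

Lemma ones_sh_hi b N k : ones_upto (sh b N) (k + N.+2) = ones_upto b (k + N).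
Proof.
elim: k => [|k IH].
  rewrite !add0n !onesS; have [-> ->] := sh_mid b N; rewrite !addn0.
  by apply: ones_eq (leqnn N) => i /andP [_ iN]; rewrite sh_lo.
by rewrite addSn onesS IH addSn onesS sh_hi.
Qed.

Lemma ones_sh_lo b N m : (m <= N)%N -> ones_upto (sh b N) m = ones_upto b m.
Proof.
by move=> mN; apply: ones_eq mN => i /andP [_ iN]; rewrite sh_lo.
Qed.

Lemma rho_sh b N : rho (sh b N) = rho b.
Proof.
apply: funext => n; apply/idP/idP => /rhoP [m [m1 dm om E]]; apply/rhoP.
- case: (leqP m N) => mN.
    exists m; split => //; first by rewrite -(sh_lo b mN).
    by rewrite -(ones_sh_lo b mN).
  have [h1 h2] := sh_mid b N.
  have mN2 : (N.+2 < m)%N.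
    case: (ltngtP m N.+1) => [h|h|h]; [lia| |by move: dm; rewrite h h1].
    by case: (ltngtP m N.+2) => [h'|h'|h']; [lia|lia|move: dm; rewrite h' h2].
  have [k Ek] : exists k, m = (k + N.+2)%N.+1 by exists (m - N.+3)%N; lia.
  subst m; exists (k + N).+1; split => //.
  + by rewrite -sh_hi.
  + by move: om; rewrite !addnS !oddS !negbK.
  + by rewrite onesS -ones_sh_hi -sh_hi -onesS.
- case: (leqP m N) => mN.
    exists m; split => //; first by rewrite sh_lo.
    by rewrite ones_sh_lo.
  have [k Ek] : exists k, m = (k + N)%N.+1 by exists (m - N.+1)%N; lia.
  subst m; exists (k + N.+2).+1; split => //.
  + by rewrite sh_hi.
  + by move: om; rewrite !addnS !oddS !negbK.
  + by rewrite onesS sh_hi ones_sh_hi -onesS.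
Qed.

Lemma Pc_sh b N (x : R) : Pc x b -> Pc (S b N + (x - S b N) / 4) (sh b N).
Proof.
move=> HP n; have /andP [a1 a2] := HP N.
case: (leqP n N) => nN.
  rewrite S_sh_lo //; have /andP [c1 c2] := HP n.
  have := S_mono (R:=R) b nN; lra.
case: (eqVneq n N.+1) => [->|nN1].
  rewrite S_rec S_sh_lo // (sh_mid b N).1 mul0r addr0 wS; lra.
have [k ->] : exists k, n = (k + N.+2)%N by exists (n - N.+2)%N; lia.
rewrite S_sh_hi; have /andP [c1 c2] := HP (k + N)%N.
have : w (k + N.+2) = w (k + N) / 4 by rewrite !addnS !wS; lra.
lra.
Qed.

Lemma pert (x : R) N : 0 < x <= 1 -> exists x',
  [/\ 0 < x' <= 1, Rmap x' = Rmap x, x' != x, `|x' - x| <= w N & (N = 0%N -> x' = x / 4)].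
Proof.
move=> Hx; have HP := beta_Pc Hx.
have HP' := Pc_sh N HP.
set x' := S (beta x) N + (x - S (beta x) N) / 4 in HP' *.
have /andP [a1 a2] := HP N.
have /andP [b1 b2] := HP' 0%N; rewrite S0 w0 add0r in b1 b2.
have Hx' : 0 < x' <= 1 by rewrite b1 b2.
have xx : x' < x by rewrite /x'; lra.
exists x'; split.
- exact: Hx'.
- have nx' : x' != 0 by rewrite gt_eqF.
  have nx : x != 0 by case/andP: Hx => h _; rewrite gt_eqF.
  rewrite (Rmap_pos nx') (Rmap_pos nx).
  by rewrite (rho_ext (beta_eq Hx' HP')) rho_sh.
- by rewrite lt_eqF.
- rewrite ltr0_norm ?subr_lt0 //; rewrite /x'; lra.
- by move=> N0; rewrite /x' N0 S0; lra.
Qed.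

End Pert.

Set Implicit Arguments. Unset Strict Implicit. Unset Printing Implicit Defensive.
Section Clos.
Context {R : realType}.
Local Notation S := (@S R).
Local Notation w := (@w R).
Local Notation v := (@v R).
Local Notation ps := (@ps R).
Implicit Types (d c b : nat -> bool).

Lemma closure_ball (A : set R) z e : closure A z -> 0 < e -> exists x, A x /\ `|z - x| < e.
Proof.
move=> cz e0; have [x [Ax bx]] := cz _ (nbhsx_ballx z e e0).
by exists x; split => //; move: bx; rewrite -ball_normE.
Qed.

Lemma ball_closure (A : set R) z : (forall e, 0 < e -> exists x, A x /\ `|z - x| < e) -> closure A z.
Proof.
move=> H B /nbhs_ballP [e e0 Hb]; have [x [Ax zx]] := H e e0.
by exists x; split => //; apply: Hb; rewrite -ball_normE.
Qed.

Lemma closure_fiber01 (y : R) z : closure (fiber y) z -> 0 <= z <= 1.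
Proof.
move=> cz.
have : closure (fiber y) `<=` (`[0, 1]%classic : set R).
  rewrite [X in _ `<=` X](_ : _ = closure (`[0, 1]%classic : set R)); last first.
    by apply/closure_id; apply: itv_closed.
  apply: closureS => x [H _]; by rewrite /= in_itv /=.
by move/(_ z cz); rewrite /= in_itv.
Qed.

Lemma S_dyadic d n : exists k : nat, S d n = k%:R * w n.
Proof.
elim: n => [|n [k Hk]]; first by exists 0%N; rewrite S0 mul0r.
exists (k.*2 + d n.+1)%N; rewrite S_rec Hk.
have -> : w n = 2 * w n.+1 by rewrite wS; field.
by rewrite natrD -muln2 natrM; ring.
Qed.

Lemma dyadic0 : @dyadic R 0.
Proof. by split; [rewrite lexx ler01 | exists 0%N, 0%N; rewrite mul0r]. Qed.

Lemma abs_le2 (a b e : R) : a <= b + e -> b <= a + e -> `|a - b| <= e.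
Proof. by move=> h1 h2; rewrite ler_norml; apply/andP; split; lra. Qed.

Lemma fiber_close_agree (y z : R) (x : R) n : 0 < z <= 1 -> fiber y x ->
  S (beta z) n < x <= S (beta z) n + w n ->
  `|y - Rmap z| <= w (ones_upto (beta z) n).
Proof.
move=> Hz [/andP [x0 x1] Rx] /andP [h1 h2].
set b := beta z.
have x0' : 0 < x by apply: le_lt_trans h1; apply: S_ge0.
have Hx : 0 < x <= 1 by rewrite x0' x1.
have HPx := beta_Pc Hx.
have agree : forall k, (1 <= k <= n)%N -> b k = beta x k.
  apply: (@uniqP_upto R x b (beta x) n) => [k kn|k _]; last exact: HPx.
  have := S_mono (R:=R) b kn; have := S_up (R:=R) b kn; lra.
have ragree : forall i, (1 <= i <= ones_upto b n)%N -> rho b i = rho (beta x) i.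
  by move=> i /andP [_ iK]; apply: rho_agree agree iK.
have nz : z != 0 by case/andP: Hz => h _; rewrite gt_eqF.
have nx : x != 0 by rewrite gt_eqF.
rewrite (Rmap_pos nz) -Rx (Rmap_pos nx).
have e1 := v_agree (R:=R) ragree.
have e2 : v (rho (beta x)) <= v (rho b) + w (ones_upto b n).
  by apply: v_agree => i Hi; rewrite ragree.
exact: (abs_le2 e2 e1).
Qed.

Lemma closure_nondyadic (y z : R) : closure (fiber y) z -> ~ dyadic z -> fiber y z.
Proof.
move=> cz ndz; have /andP [z0 z1] := closure_fiber01 cz.
have zn0 : z != 0 by apply/eqP => zE; apply: ndz; rewrite zE; exact: dyadic0.
have Hz : 0 < z <= 1 by rewrite lt_def zn0 z0 z1.
have HP := beta_Pc Hz.
have [_ Hinf] := Pc_v HP.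
set b := beta z in HP Hinf.
have Hlt : forall n, z < S b n + w n.
  move=> n; have /andP [_ h] := HP n; rewrite lt_def h andbT.
  apply/negP => /eqP zE; apply: ndz; split; first by rewrite z0 z1.
  have [k Hk] := S_dyadic b n; exists k.+1, n.
  by rewrite -zE Hk -[k.+1]addn1 natrD mulrDl mul1r.
have key : forall n, `|y - Rmap z| <= w (ones_upto b n).
  move=> n; have /andP [h1 _] := HP n.
  have e0 : 0 < Num.min (z - S b n) (S b n + w n - z).
    by rewrite lt_min !subr_gt0 h1 Hlt.
  have [x [fx zx]] := closure_ball cz e0.
  apply: (fiber_close_agree Hz fx).
  move: zx; rewrite lt_min => /andP [].
  rewrite !ltr_norml => /andP [a1 a2] /andP [a3 a4].
  apply/andP; split; first lra.
  by apply: ltW; lra.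
have key2 : forall K, `|y - Rmap z| <= w K.
  move=> K; have [n Hn] := ones_unbounded Hinf K.
  exact: le_trans (key n) (w_anti (R:=R) Hn).
split; first by rewrite z0 z1.
apply/eqP; rewrite eq_le; apply/andP; split; apply: le_w => K;
  have := key2 K; rewrite ler_norml => /andP []; lra.
Qed.

End Clos.

Set Implicit Arguments. Unset Strict Implicit. Unset Printing Implicit Defensive.
Section Meas.
Context {R : realType}.
Local Notation S := (@S R).
Local Notation w := (@w R).
Local Notation v := (@v R).
Local Notation ps := (@ps R).
Implicit Types (d c b : nat -> bool).

Definition cP (y : R) : nat -> bool := get (Pc y).
Definition cQ (y : R) : nat -> bool := get (Qc y).

Lemma word_cases (y : R) d : v d = y ->
  (forall k, (1 <= k)%N -> d k = cP y k) \/ (forall k, (1 <= k)%N -> d k = cQ y k).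
Proof.
move=> vd; case: (pselect (infinitely_many_ones d)) => Hi.
  left; have HP := inf_Pc (R:=R) Hi; rewrite vd in HP.
  have HP' : Pc y (cP y) by apply: getPex; exists d.
  exact: uniqP HP HP'.
right; have HQ := fin_Qc (R:=R) Hi; rewrite vd in HQ.
have HQ' : Qc y (cQ y) by apply: getPex; exists d.
exact: uniqQ HQ HQ'.
Qed.

Definition kids c (L : nat) (p : R * nat) : seq (R * nat) :=
  (p.1, p.2) :: (if c p.2.+1 then [:: (p.1 + w (L.*2).+2, p.2.+1)]
                 else (p.1 + w (L.*2).+1, p.2.+1) ::
                      (if c p.2.+2 then [:: (p.1 + w (L.*2).+1 + w (L.*2).+2, p.2.+2)] else [::])).

Fixpoint cov c (L : nat) : seq (R * nat) :=
  match L with 0 => [:: (0, 0%N)] | L'.+1 => flatten [seq kids c L' p | p <- cov c L'] end.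

Lemma size_kids c L p : (size (kids c L p) <= 3)%N.
Proof. by rewrite /kids; case: (c _); case: (c _). Qed.

Lemma size_cov c L : (size (cov c L) <= 3 ^ L)%N.
Proof.
elim: L => [//|L IH] /=.
have H : forall s : seq (R * nat), (size (flatten [seq kids c L p | p <- s]) <= 3 * size s)%N.
  elim=> [//|p s IHs]; rewrite map_cons.
  have -> : flatten (kids c L p :: [seq kids c L p0 | p0 <- s]) =
    kids c L p ++ flatten [seq kids c L p0 | p0 <- s] by [].
  rewrite size_cat (_ : size (p :: s) = (size s).+1) //; have := size_kids c L p; move: IHs; lia.
apply: leq_trans (H _) _; rewrite expnS leq_mul2l /=; exact: IH.
Qed.

Lemma cov_in c (x : R) : 0 < x <= 1 -> (forall k, (1 <= k)%N -> rho (beta x) k = c k) ->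
  forall L, (S (beta x) L.*2, ones_upto (beta x) L.*2) \in cov c L.
Proof.
move=> Hx Hc; set d := beta x.
have cat : forall m, (1 <= m)%N -> d m -> c (ones_upto d m) = ~~ odd m.
  move=> m m1 dm; rewrite -Hc ?rho_at //.
  by case: m m1 dm => [//|m] _ dm; rewrite onesS dm addn1.
elim=> [|L IH]; first by rewrite /= S0 ones0 mem_seq1.
apply/flatten_mapP; exists (S d L.*2, ones_upto d L.*2) => //.
rewrite doubleS !S_rec !onesS /kids /=.
set a := S d L.*2; set j := ones_upto d L.*2.
have c1 := cat (L.*2).+1 isT; have c2 := cat (L.*2).+2 isT.
rewrite !onesS -/j in c1 c2.
case E1: (d (L.*2).+1); case E2: (d (L.*2).+2); rewrite ?E1 ?E2 /= in c1 c2 *;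
  rewrite ?addn1 ?addn0 /= ?odd_double /= in c1 c2.
- have -> : c j.+1 = false by rewrite c1.
  have -> : c j.+2 = true by rewrite c2.
  by rewrite !mul1r !addn1 !inE eqxx !orbT.
- have -> : c j.+1 = false by rewrite c1.
  by rewrite mul1r mul0r addr0 !addn0 addn1 !inE eqxx !orbT.
- have -> : c j.+1 = true by rewrite c2.
  by rewrite mul1r mul0r addr0 !addn0 addn1 !inE eqxx !orbT.
- by rewrite !mul0r !addr0 !addn0 !inE eqxx.
Qed.

Fixpoint Ucov (s : seq (R * nat)) (r : R) : set R :=
  match s with [::] => set0 | p :: s' => (`[p.1, p.1 + r]%classic : set R) `|` Ucov s' r end.

Lemma Ucov_in s r p (x : R) : p \in s -> p.1 <= x <= p.1 + r -> Ucov s r x.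
Proof.
elim: s => [//|q s IH]; rewrite inE => /orP [/eqP <-|ps] Hx /=.
  by left; rewrite /= in_itv /=.
by right; apply: IH.
Qed.

Lemma Ucov_closed s r : closed (Ucov s r).
Proof. elim: s => [|p s IH] /=; [exact: closed0 | apply: closedU => //; exact: itv_closed]. Qed.

Lemma Ucov_measurable s r : measurable (Ucov s r : set R).
Proof.
elim: s => [|p s IH] /=; first exact: measurable0.
apply: measurableU => //; exact: measurable_itv.
Qed.

Lemma Ucov_meas s r : 0 <= r -> (lebesgue_measure (Ucov s r) <= ((size s)%:R * r)%:E)%E.
Proof.
move=> r0; elim: s => [|p s IH] /=; first by rewrite measure0 mul0r.
apply: le_trans (measureU2 _ _ _) _.
- exact: measurable_itv.
- exact: Ucov_measurable.
rewrite -[(size s).+1]addn1 natrD mulrDl mul1r addrC EFinD.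
apply: leeD => //.
change (lebesgue_measure ([set` `[p.1, p.1 + r]%R] : set R) <= r%:E)%E.
rewrite lebesgue_measure_itv /=.
case: ifP => _; last by rewrite lee_fin.
by rewrite lee_fin addrC addKr.
Qed.

Lemma pow34 L : (3 ^ L)%:R * w (L.*2) = (3 / 4 : R) ^+ L.
Proof.
elim: L => [|L IH]; first by rewrite expn0 w0 mulr1 expr0.
rewrite doubleS !wS expnS natrM exprS -IH; field.
done.
Qed.

End Meas.

Set Implicit Arguments. Unset Strict Implicit. Unset Printing Implicit Defensive.
Section Final.
Context {R : realType}.
Local Notation S := (@S R).
Local Notation w := (@w R).
Local Notation v := (@v R).
Implicit Types (d c b : nat -> bool).

Definition FL (y : R) (L : nat) : set R :=
  (`[0, 0]%classic : set R) `|` Ucov (cov (cP y) L) (w L.*2) `|` Ucov (cov (cQ y) L) (w L.*2).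

Lemma FL_closed y L : closed (FL y L).
Proof. by apply: closedU; [apply: closedU; [exact: itv_closed|]|]; exact: Ucov_closed. Qed.

Lemma FL_measurable y L : measurable (FL y L).
Proof.
by apply: measurableU; [apply: measurableU; [exact: measurable_itv|]|]; exact: Ucov_measurable.
Qed.

Lemma fiber_cover (y : R) L : fiber y `<=` FL y L.
Proof.
move=> x [/andP [x0 x1] Rx].
case: (eqVneq x 0) => [->|xn0]; first by left; left; rewrite /= in_itv /= lexx.
have Hx : 0 < x <= 1 by rewrite lt_def xn0 x0 x1.
rewrite (Rmap_pos xn0) in Rx.
have /andP [h1 h2] := beta_Pc Hx (L.*2).
have bnd : (S (beta x) L.*2, ones_upto (beta x) L.*2).1 <= x <=
           (S (beta x) L.*2, ones_upto (beta x) L.*2).1 + w L.*2 by rewrite /= h2 ltW.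
case: (word_cases Rx) => H.
  by left; right; apply: Ucov_in (cov_in Hx H L) bnd.
by right; apply: Ucov_in (cov_in Hx H L) bnd.
Qed.

Lemma closure_cover (y : R) L : closure (fiber y) `<=` FL y L.
Proof.
rewrite [X in _ `<=` X](closure_id _).1; last exact: FL_closed.
exact: closureS (@fiber_cover y L).
Qed.

Lemma FL_meas (y : R) L : (lebesgue_measure (FL y L) <= (2 * (3 / 4) ^+ L)%:E)%E.
Proof.
apply: le_trans (measureU2 _ _ _) _.
- by apply: measurableU; [exact: measurable_itv|exact: Ucov_measurable].
- exact: Ucov_measurable.
apply: le_trans (leeD (measureU2 _ _ _) (lexx _)) _.
- exact: measurable_itv.
- exact: Ucov_measurable.
have e0 : lebesgue_measure (`[0, 0]%classic : set R) = 0%E.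
  change (lebesgue_measure ([set` `[(0:R), 0]%R] : set R) = 0)%E.
  by rewrite lebesgue_measure_itv /= ltxx.
have H0 : (lebesgue_measure (`[0%R, 0%R]%classic : set R) <= 0)%E by rewrite e0.
have hw : 0 <= w L.*2 by apply: ltW; apply: w_gt0.
have H : forall c, (lebesgue_measure (Ucov (cov c L) (w L.*2)) <= ((3 / 4) ^+ L)%:E)%E.
  move=> c; apply: le_trans (Ucov_meas _ hw) _; rewrite lee_fin -pow34.
  by apply: ler_wpM2r => //; rewrite ler_nat size_cov.
apply: le_trans (leeD (leeD H0 (H _)) (H _)) _.
by rewrite add0e -EFinD lee_fin; lra.
Qed.

Lemma closure_meas0 (y : R) : lebesgue_measure (closure (fiber y)) = 0%E.
Proof.
have mcl : measurable (closure (fiber y)).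
  by apply: measurable_realfun.closed_measurable; exact: closed_closure.
apply/eqP; rewrite eq_le measure_ge0 andbT.
apply/lee_addgt0Pr => e e0; rewrite add0e.
have q : 0 <= (3 / 4 : R) < 1 by apply/andP; split; lra.
have e2 : 0 < e / 2 by lra.
have [L HL] := geo_small q e2.
have Hle : (lebesgue_measure (closure (fiber y)) <= lebesgue_measure (FL y L))%E.
  apply: le_measure; [by rewrite inE | by rewrite inE; exact: FL_measurable | exact: closure_cover].
apply: le_trans Hle _.
apply: le_trans (FL_meas y L) _; rewrite lee_fin; lra.
Qed.

End Final.

Set Implicit Arguments. Unset Strict Implicit. Unset Printing Implicit Defensive.
Section Top.
Context {R : realType}.
Local Notation S := (@S R).
Local Notation w := (@w R).
Local Notation v := (@v R).

Lemma tiny_fiber (y : R) : (exists x0, fiber y x0 /\ 0 < x0) ->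
  forall k, exists x, fiber y x /\ 0 < x <= w (k.*2).
Proof.
move=> [x0 [f0 p0]]; elim=> [|k [x [[x01 Rx] /andP [xp xw]]]].
  by exists x0; split => //; case: f0 => /andP [_ h] _; rewrite w0 p0 h.
have Hx : 0 < x <= 1 by case/andP: x01 => _ h; rewrite xp h.
have [x' [/andP [h1 h2] Rx' _ _ /(_ erefl) E]] := pert 0 Hx.
exists x'; split; first by split; [rewrite ltW // h2 | rewrite Rx'].
rewrite h1 /=.
rewrite E.
rewrite doubleS wS wS.
clear -xw xp.
lra.
Qed.

Lemma nh1 (z p e : R) : `|z| < e / 2 -> 0 < p -> p < e / 2 -> `|z - p| < e.
Proof. rewrite !ltr_norml => /andP [a1 a2] h1 h2; apply/andP; split; lra. Qed.

Lemma nh2 (z x x' e a : R) : `|z - x| < e / 2 -> `|x' - x| <= a -> a < e / 2 -> `|z - x'| < e.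
Proof.
rewrite !ltr_norml ler_norml => /andP [a1 a2] /andP [a3 a4] h; apply/andP; split; lra.
Qed.

Lemma q4 (p : R) : 0 < p -> p / 4 < p.
Proof. move=> h; lra. Qed.

Lemma nh3 (z e : R) : 0 < e -> `|z| < e / 2 -> `|z| < e.
Proof. move=> e0 h; apply: lt_trans h _; lra. Qed.

Lemma two_points (y z e : R) : 0 <= y <= 1 -> closure (fiber y) z -> 0 < e ->
  exists x1 x2, [/\ fiber y x1, fiber y x2, x1 != x2, `|z - x1| < e & `|z - x2| < e].
Proof.
move=> y01 cz e0; have e2 : 0 < e / 2 by rewrite divr_gt0.
have [x [fx zx]] := closure_ball cz e2.
have [N HN] := w_small e2.
case: (eqVneq x 0) => [x0|xn0].
  rewrite x0 subr0 in zx.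
  have [p [fp /andP [p0 pw]]] := tiny_fiber (fiber_pos y01) N.
  have pN : w N.*2 <= w N by apply: w_anti; rewrite -addnn leq_addr.
  have pe : p < e / 2 by apply: le_lt_trans pw (le_lt_trans pN HN).
  have Hp : 0 < p <= 1 by case: fp => /andP [_ h] _; rewrite p0 h.
  have [p' [/andP [h1 h2] Rp' pp' _ /(_ erefl) E]] := pert 0 Hp.
  have pe' : p' < e / 2 by rewrite E; exact: lt_trans (q4 p0) pe.
  exists p, p'; split.
  - exact: fp.
  - by case: fp => p01 Rp; split; [rewrite ltW // h2 | rewrite Rp'].
  - by rewrite eq_sym.
  - exact: nh1.
  - exact: nh1.
have Hx : 0 < x <= 1 by case: fx => /andP [h0 h] _; rewrite lt_def xn0 h0 h.
have [x' [/andP [h1 h2] Rx' xx' nx' _]] := pert N Hx.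
exists x, x'; split.
- exact: fx.
- by case: fx => x01 Rx; split; [rewrite ltW // h2 | rewrite Rx'].
- by rewrite eq_sym.
- exact: nh3.
- exact: nh2 zx nx' HN.
Qed.

Lemma cl_perfect (y : R) : 0 <= y <= 1 -> perfect_set (closure (fiber y)).
Proof.
move=> y01; split; first exact: closed_closure.
apply/seteqP; split.
  move=> z /subset_limit_point.
  by rewrite -(closure_id _).1 //; exact: closed_closure.
move=> z cz U /nbhs_ballP [e e0 Hb].
have [x1 [x2 [f1 f2 x12 z1 z2]]] := two_points y01 cz e0.
case: (eqVneq x1 z) => [E|n1].
  exists x2; split; first by rewrite -E eq_sym.
    exact: subset_closure.
  by apply: Hb; rewrite -ball_normE.
exists x1; split => //; first exact: subset_closure.
by apply: Hb; rewrite -ball_normE.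
Qed.

Lemma cl_td (y : R) : totally_disconnected (closure (fiber y)).
Proof.
move=> x Hx; apply/seteqP; split; last first.
  by move=> _ ->; apply: connected_component_refl.
move=> z Cz; apply: contrapT => zx.
have conn := (connected_intervalP _).1 (@component_connected _ _ x).
have sub := @connected_component_sub _ (closure (fiber y)) x.
have Cx := connected_component_refl Hx.
have key : forall a b, a < b -> connected_component (closure (fiber y)) x a ->
    connected_component (closure (fiber y)) x b -> False.
  move=> a b ab Ca Cb.
  have sab : (`[a, b]%classic : set R) `<=` closure (fiber y).
    move=> t; rewrite /= in_itv /= => tab; apply: sub; exact: conn a b Ca Cb t tab.
  have Hle : (lebesgue_measure (`[a, b]%classic : set R) <= lebesgue_measure (closure (fiber y)))%E.
    apply: le_measure; [by rewrite inE; exact: measurable_itv | |exact: sab].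
    by rewrite inE; apply: measurable_realfun.closed_measurable; exact: closed_closure.
  move: Hle; rewrite closure_meas0.
  change ((lebesgue_measure ([set` `[a, b]%R] : set R) <= 0)%E -> False).
  by rewrite lebesgue_measure_itv /= lte_fin ab lee_fin subr_le0 leNgt ab.
have /lt_total /orP [H|H] : z != x by apply/eqP.
  exact: key H Cz Cx.
exact: key H Cx Cz.
Qed.

End Top.

Unset Implicit Arguments.

Theorem proposition5p3 (R : realType) (y : R) :
  0 <= y <= 1 ->
  [/\ cantor_set (closure (fiber y)),
      (@lebesgue_measure R (closure (fiber y)) = 0)%E
    & closure (fiber y) `\` fiber y `<=` dyadic].
Proof.
move=> y01; split.
- split.
  + have [x [fx _]] := fiber_pos y01; exists x; exact: subset_closure.
  + apply: (@subclosed_compact _ _ (`[0, 1]%classic : set R)).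
    * exact: closed_closure.
    * exact: segment_compact.
    * by move=> z /closure_fiber01 h; rewrite /= in_itv.
  + exact: cl_perfect.
  + exact: cl_td.
- exact: closure_meas0.
- move=> z [cz nfz]; apply: contrapT => nd; apply: nfz; exact: closure_nondyadic.
Qed.
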